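(* Let $A,B\in \mathbb{C}^{n\times n}$. Then the following are equivalent: (1) $A\leq^{\mathrm{cEP}}B$. (2) There exist $E_1=AA^{\mathrm{cEP}}$ and $E_2=E_2^*=E_2^2$ such that $A=\begin{pmatrix} T_1&S_1&S_2\\ 0&N_1&N_2\\ 0&N_3&N_4\end{pmatrix}_{E\times E}$, $B=\begin{pmatrix} T_1&S_1&S_2\\ 0&T_3&T_4\\ 0&0&T_5\end{pmatrix}_{E\times E}$, where $E=\{ E_1,E_2,I_n-E_1-E_2\}$, $T_1\in (E_1\mathbb{C}^{n\times n}E_1)^{-1}$, $T_3\in (E_2\mathbb{C}^{n\times n}E_2)^{-1}$ and $N_1+N_2+N_3+N_4,\ T_5\in \mathbb{C}^{n\times n}$ are nilpotent.
   Context: $\mathbb{C}^{n\times n}$ is the algebra of complex $n\times n$ matrices with conjugate transpose. The core-EP inverse $A^{\mathrm{cEP}}$ of $A$ is the unique $X$ with $XA^{k+1}=A^k$, $AX^2=X$, $(AX)^*=AX$ for some $k\in\mathbb{N}$. The core-EP order is $A\leq^{\mathrm{cEP}}B$ iff $AA^{\mathrm{cEP}}=BA^{\mathrm{cEP}}$ and $A^{\mathrm{cEP}}A=A^{\mathrm{cEP}}B$. For a set $E=\{E_1,E_2,E_3\}$ of idempotents summing to $I_n$ with $E_iE_j=0$ ($i\neq j$), a matrix $X$ is written $X=(E_iXE_j)_{E\times E}$. *)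

(* Defs.v *)
From HB Require Import structures.
From mathcomp Require Import all_boot all_order all_algebra.
From mathcomp Require Import boolp classical_sets reals.
From mathcomp Require Import complex.
Set Implicit Arguments. Unset Strict Implicit. Unset Printing Implicit Defensive.
Import Order.TTheory GRing.Theory Num.Theory.
Local Open Scope ring_scope.

Definition ctrmx (R : realType) (n : nat) (A : 'M[R[i]]_n) : 'M[R[i]]_n :=
  map_mx Num.conj (A^T).

Definition is_coreEP (R : realType) (n : nat) (A X : 'M[R[i]]_n) : Prop :=
  exists k : nat,
    [/\ X *m A ^+ k.+1 = A ^+ k, A *m (X *m X) = X & ctrmx (A *m X) = A *m X].

(* The core-EP inverse: the (unique) X satisfying the core-EP equations,
   chosen by classical description (0 if none existed). *)
Definition coreEP (R : realType) (n : nat) (A : 'M[R[i]]_n) : 'M[R[i]]_n :=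
  xget 0 (fun X => is_coreEP A X).

Definition coreEP_le (R : realType) (n : nat) (A B : 'M[R[i]]_n) : Prop :=
  A *m coreEP A = B *m coreEP A /\ coreEP A *m A = coreEP A *m B.

Definition corner_unit (R : realType) (n : nat) (E T : 'M[R[i]]_n) : Prop :=
  T = E *m T *m E /\
  exists Y : 'M[R[i]]_n, [/\ Y = E *m Y *m E, T *m Y = E & Y *m T = E].

Definition mx_nilpotent (R : realType) (n : nat) (N : 'M[R[i]]_n) : Prop :=
  exists k : nat, N ^+ k = 0.

Definition idem_system3 (R : realType) (n : nat) (E1 E2 E3 : 'M[R[i]]_n) : Prop :=
  [/\ E1 *m E1 = E1, E2 *m E2 = E2, E3 *m E3 = E3, E1 + E2 + E3 = 1%:M &
   [/\ E1 *m E2 = 0, E2 *m E1 = 0, E1 *m E3 = 0 & E3 *m E1 = 0] /\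
   E2 *m E3 = 0 /\ E3 *m E2 = 0].

(* Main.v *)
Require Import Defs.
From HB Require Import structures.
From mathcomp Require Import all_boot all_order all_algebra.
From mathcomp Require Import boolp classical_sets reals.
From mathcomp Require Import complex.
Import Order.TTheory GRing.Theory Num.Theory.
Local Open Scope ring_scope.
Set Implicit Arguments. Unset Strict Implicit.
Lemma drazin_step (F : fieldType) n' (A : 'M[F]_n'.+1) :
  exists m (W : 'M[F]_n'.+1), GRing.comm A W /\ A ^+ m = A ^+ m.+1 * W.
Proof.
suff H : forall p j, p != 0 -> A ^+ j * horner_mx A p = 0 ->
  exists m (W : 'M[F]_n'.+1), GRing.comm A W /\ A ^+ m = A ^+ m.+1 * W.
  apply: (H (char_poly A) 0%N); first exact: monic_neq0 (char_poly_monic A).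
  by rewrite expr0 mul1r Cayley_Hamilton.
elim/poly_ind => [|p c IH] j; first by rewrite eqxx.
move=> nz; rewrite rmorphD rmorphM /= horner_mx_X horner_mx_C.
have cA : GRing.comm A (horner_mx A p) by apply: comm_mx_horner.
have [c0|c0] := eqVneq c 0.
  rewrite c0 -scalemx1 scale0r addr0 => h; apply: (IH j.+1).
    by apply: contraNneq nz => ->; rewrite c0 mul0r add0r.
  by rewrite exprSr -mulrA cA h.
move=> h; exists j, (- c^-1 *: horner_mx A p); split.
  by rewrite /GRing.comm -scalerAr -scalerAl cA.
rewrite mulrDr -mulmxE mul_mx_scalar mulmxE in h.
have h2 : A ^+ j * horner_mx A p * A = - (c *: A ^+ j).
  by apply/eqP; rewrite -addr_eq0 -mulrA h.
rewrite -scalerAr exprSr -mulrA cA mulrA h2.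
rewrite scalerN scaleNr opprK scalerA mulVf // scale1r.
by []. Qed.
Section S.
Variables (R : realType) (n : nat).
Implicit Types A B X Y : 'M[R[i]]_n.


Lemma ctrmxK A : ctrmx (ctrmx A) = A.
Proof. by apply/matrixP => i j; rewrite !mxE conjCK. Qed.

Lemma ctrmxM A B : ctrmx (A *m B) = ctrmx B *m ctrmx A.
Proof. by rewrite /ctrmx trmx_mul map_mxM. Qed.

Lemma ctrmxD A B : ctrmx (A + B) = ctrmx A + ctrmx B.
Proof. by rewrite /ctrmx linearD /= map_mxD. Qed.

Lemma ctrmxN A : ctrmx (- A) = - ctrmx A.
Proof. by rewrite /ctrmx linearN /= map_mxN. Qed.

Lemma ctrmx1 : ctrmx (1%:M : 'M[R[i]]_n) = 1%:M.
Proof. by rewrite /ctrmx trmx1 map_scalar_mx rmorph1. Qed.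

Lemma ctrmx0 : ctrmx (0 : 'M[R[i]]_n) = 0.
Proof. by rewrite /ctrmx trmx0 map_mx0. Qed.

Lemma pos_mx Y : Y *m ctrmx Y = 0 -> Y = 0.
Proof.
move=> h; apply/matrixP => i j; rewrite mxE.
have := congr1 (fun M : 'M[R[i]]_n => M i i) h; rewrite !mxE => /eqP.
rewrite psumr_eq0 => [/allP /(_ j) |k _].
  rewrite mem_index_enum => /(_ isT) /=; rewrite !mxE mul_conjC_eq0 => /eqP //.
by rewrite !mxE mul_conjC_ge0.
Qed.

Lemma pos_mx' Y : ctrmx Y *m Y = 0 -> Y = 0.
Proof.
move=> h; rewrite -[Y]ctrmxK (pos_mx (Y := ctrmx Y)) ?ctrmx0 // ctrmxK //.
Qed.

Lemma ctrmxMr A B : ctrmx (A * B) = ctrmx B * ctrmx A.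
Proof. exact: ctrmxM. Qed.
End S.

Lemma drazin_stepC (R : realType) n' (A : 'M[R[i]]_n'.+1) :
  exists m (W : 'M[R[i]]_n'.+1), A * W = W * A /\ A ^+ m = A ^+ m.+1 * W.
Proof. have [m [W [c h]]] := drazin_step A. by exists m, W; split; [exact c | exact h]. Qed.

Lemma proj_exists (R : realType) n' (M : 'M[R[i]]_n'.+1) :
  exists P G, [/\ ctrmx P = P, P * P = P, P * M = M & P = M * G].
Proof.
set H := M * ctrmx M.
have hH : ctrmx H = H by rewrite ctrmxMr ctrmxK.
have ker : forall Z, H * (H * Z) = 0 -> H * Z = 0.
  move=> Z hz; apply: pos_mx'; rewrite mulmxE ctrmxMr hH -mulrA hz mulr0 //.
have [m [W [cW hW]]] := drazin_stepC H.
have hW1 : H = H * H * W.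
  have e : H ^+ m * (1 - H * W) = 0 by rewrite mulrBr mulr1 mulrA -exprSr -hW subrr.
  case: m {hW} e => [|m] e.
    rewrite expr0 mul1r in e; move/eqP: e; rewrite subr_eq0 => /eqP e.
    by rewrite -mulrA -e mulr1.
  have : H * (1 - H * W) = 0.
    elim: m e => [|m IHm] e; first by rewrite expr1 in e.
    apply: IHm; rewrite exprS -mulrA; apply: ker.
    by rewrite (_ : H * (H * (H ^+ m * _)) = H ^+ m.+2 * (1 - H * W)) // !exprS !mulrA.
  by move/eqP; rewrite mulrBr mulr1 subr_eq0 mulrA => /eqP.
exists (H * W), (ctrmx M * W).
set P := H * W.
have PH : P * H = H.
  by rewrite /P -mulrA -cW mulrA -hW1.
have cW' : ctrmx W * H = H * ctrmx W.
  by rewrite -{1}hH -ctrmxMr cW ctrmxMr hH.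
have cP : ctrmx P = P * ctrmx P.
  by rewrite /P ctrmxMr hH cW' mulrA PH.
have hP : ctrmx P = P.
  by rewrite -{2}[P]ctrmxK cP ctrmxMr ctrmxK -cP.
split => //.
- by rewrite -{2}hP -cP hP.
- suff h : (1 - P) * M = 0.
    by apply/esym/eqP; rewrite -subr_eq0 -[M in M - _]mul1r -mulrBl h.
  apply: pos_mx; rewrite mulmxE ctrmxMr -mulrA [M * (_ * _)]mulrA -/H.
  by rewrite mulrA mulrBl mul1r PH subrr mul0r.
- by rewrite /P /H mulrA.
Qed.

Lemma coreEP_exists1 (R : realType) n' (A : 'M[R[i]]_n'.+1) : exists X, is_coreEP A X.
Proof.
have [k [W [cW hW]]] := drazin_stepC A.
have [P [G [hP PP PM PG]]] := proj_exists (A ^+ k).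
have U1 : A ^+ k * (A * W) = A ^+ k by rewrite mulrA -exprSr -hW.
have K1 : A ^+ k * (A ^+ k.+1 * W ^+ k.+1) = A ^+ k.
  rewrite -exprMn_comm //; elim: k.+1 => [|j IH]; first by rewrite expr0 mulr1.
  by rewrite exprS mulrA U1.
have cWA : forall i j, W ^+ j * A ^+ i = A ^+ i * W ^+ j.
  by move=> i j; apply: commrX; apply/commr_sym; apply: commrX.
have cAA : A ^+ k.+1 * A ^+ k = A ^+ k * A ^+ k.+1 by rewrite -!exprD addnC.
have [D eD] : exists D, D = A ^+ k * W ^+ k.+1 := ex_intro _ _ erefl.
have ADAk : A * D * A ^+ k = A ^+ k.
  by rewrite eD mulrA -exprS -mulrA cWA mulrA cAA -mulrA K1.
have ADD : A * D * D = D.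
  rewrite {2}eD. rewrite mulrA. rewrite ADAk. exact: esym eD.
have PD : P * D = D by rewrite eD mulrA PM; reflexivity.
have PAk1 : P * A ^+ k.+1 = A ^+ k.+1 by rewrite exprSr mulrA PM.
exists (D * P), k; rewrite !mulmxE; split.
- by rewrite -mulrA PAk1 eD -mulrA cWA K1.
- have -> : D * P * (D * P) = D * D * P by rewrite mulrA -(mulrA D P D) PD.
  by rewrite (mulrA A (D * D) P) (mulrA A D D) ADD.
- by rewrite mulrA PG mulrA ADAk -PG.
Qed.

Lemma coreEP_exists (R : realType) n (A : 'M[R[i]]_n) : exists X, is_coreEP A X.
Proof.
case: n A => [|n'] A; last exact: coreEP_exists1.
by exists 0, 0%N; split; apply/matrixP => -[].
Qed.

Lemma coreEP_spec (R : realType) n (A : 'M[R[i]]_n) : is_coreEP A (coreEP A).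
Proof.
rewrite /coreEP; case: xgetP => // h; exfalso.
by have [X hX] := coreEP_exists A; apply: h hX.
Qed.

Section Props.
Variables (R : realType) (n : nat) (A X P : 'M[R[i]]_n) (k : nat).
Hypotheses (e1 : X * A ^+ k.+1 = A ^+ k) (e2 : A * (X * X) = X)
  (e3 : ctrmx P = P) (hP : A * X = P).

Lemma XAj j : X = A ^+ j * X ^+ j.+1.
Proof.
elim: j => [|j IH]; first by rewrite expr0 mul1r expr1.
have -> : A ^+ j.+1 * X ^+ j.+2 = A ^+ j * (A * (X * X)) * X ^+ j.
  by rewrite exprSr !exprS !mulrA.
by rewrite e2 -mulrA -exprS -IH.
Qed.

Lemma XAX : X * A * X = X.
Proof. by rewrite {2}(XAj k) mulrA -(mulrA X) -exprS e1 -XAj. Qed.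

Lemma PP : P * P = P. Proof. by rewrite -hP -!mulrA (mulrA X A X) XAX. Qed.
Lemma PX : P * X = X. Proof. by rewrite -hP -mulrA e2. Qed.
Lemma XP : X * P = X. Proof. by rewrite -hP mulrA XAX. Qed.
Lemma PAk : P * A ^+ k = A ^+ k. Proof. by rewrite -{1}e1 mulrA PX e1. Qed.

Lemma AP : A * P = P * A * P.
Proof.
have h : A * A * X = A ^+ k * (A * A * X ^+ k.+1).
  rewrite {1}(XAj k) !mulrA -[A ^+ k * A * A]mulrA -expr2 -!exprD addnC //.
rewrite -{1}hP (mulrA A A X) h -PAk -mulrA -h.
by rewrite -(mulrA A A X) hP mulrA.
Qed.

Lemma XT : X * (P * A * P) = P.
Proof.
rewrite !mulrA XP -{1}hP mulrA {2}(XAj k) mulrA.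
have -> : X * A * A * A ^+ k = X * A ^+ k.+1 * A.
  by rewrite -!mulrA -!exprS -exprSr.
by rewrite e1 -exprSr exprS -mulrA -XAj hP.
Qed.

Lemma TX : (P * A * P) * X = P.
Proof. by rewrite -mulrA PX -mulrA hP PP. Qed.

Lemma QAQ : (1 - P) * A * (1 - P) = (1 - P) * A.
Proof.
have QP : (1 - P) * P = 0 by rewrite mulrBl mul1r PP subrr.
by rewrite mulrBr mulr1 -[(1 - P) * A * P]mulrA AP !mulrA QP !mul0r subr0.
Qed.

Lemma nilQA : mx_nilpotent ((1 - P) * A * (1 - P)).
Proof.
exists k.+1; rewrite QAQ.
suff h : forall j, ((1 - P) * A) ^+ j.+1 = (1 - P) * A ^+ j.+1.
  by rewrite h exprSr mulrA mulrBl mul1r PAk subrr mul0r.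
elim => [|j IH]; first by rewrite !expr1.
by rewrite exprS IH !mulrA QAQ -mulrA -exprS.
Qed.
End Props.

Lemma cep_facts (R : realType) n (A X P : 'M[R[i]]_n) :
  is_coreEP A X -> A * X = P ->
  [/\ ctrmx P = P, P * P = P, P * X = X, X * P = X & A * P = P * A * P] /\
  [/\ X * (P * A * P) = P, (P * A * P) * X = P &
      mx_nilpotent ((1 - P) * A * (1 - P))].
Proof.
move=> [k [e1 e2 e3]] hP; rewrite !mulmxE in e1 e2 e3.
rewrite hP in e3.
split; [constructor | constructor].
- exact: e3.
- exact: PP e1 e2 hP.
- exact: PX e2 hP.
- exact: XP e1 e2 hP.
- exact: AP e1 e2 hP.
- exact: XT e1 e2 hP.
- exact: TX e1 e2 hP.
- exact: nilQA e1 e2 hP.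
Qed.

Lemma one_mx (R : realType) n : (1%:M : 'M[R[i]]_n) = 1.
Proof. by []. Qed.

Lemma ctrmx1r (R : realType) n : ctrmx (1 : 'M[R[i]]_n) = 1.
Proof. exact: ctrmx1. Qed.

Lemma corner_helper (R : realType) n (E T Y : 'M[R[i]]_n) :
  E * T * E = T -> E * Y * E = Y -> T * Y = E -> Y * T = E -> corner_unit E T.
Proof.
move=> h1 h2 h3 h4; rewrite /corner_unit !mulmxE; split; first exact: esym h1.
by exists Y; split; [exact: esym h2 | exact: h3 | exact: h4].
Qed.

Theorem corollary4p5 (R : realType) (n : nat) (A B : 'M[R[i]]_n) :
  coreEP_le A B <->
  exists E1 E2 : 'M[R[i]]_n,
    let E3 := 1%:M - E1 - E2 in
    [/\ E1 = A *m coreEP A /\ (ctrmx E2 = E2 /\ E2 *m E2 = E2),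
        idem_system3 E1 E2 E3,
        (* A = [[T1,S1,S2],[0,N1,N2],[0,N3,N4]]_{ExE} *)
        E2 *m A *m E1 = 0 /\ E3 *m A *m E1 = 0,
        (* B = [[T1,S1,S2],[0,T3,T4],[0,0,T5]]_{ExE} *)
        [/\ E1 *m B *m E1 = E1 *m A *m E1, E1 *m B *m E2 = E1 *m A *m E2
          & E1 *m B *m E3 = E1 *m A *m E3] /\
        [/\ E2 *m B *m E1 = 0, E3 *m B *m E1 = 0 & E3 *m B *m E2 = 0] &
        (* T1, T3 corner-invertible; N1+N2+N3+N4 and T5 nilpotent *)
        [/\ corner_unit E1 (E1 *m A *m E1), corner_unit E2 (E2 *m B *m E2),
            mx_nilpotent (E2 *m A *m E2 + E2 *m A *m E3 + E3 *m A *m E2 + E3 *m A *m E3)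
          & mx_nilpotent (E3 *m B *m E3)]].
Proof.
have [X eX] : exists X, X = coreEP A := ex_intro _ _ erefl.
have hX : is_coreEP A X by rewrite eX; exact: coreEP_spec.
rewrite /coreEP_le -eX.
split.
- move=> [hAB hXB]; rewrite !mulmxE in hAB hXB.
  have [P eP] : exists P, P = A * X := ex_intro _ _ erefl.
  have [[Ph PP PX XP AP] [XT TX nilA]] := cep_facts hX (esym eP).
  have [Q eQ] : exists Q, Q = 1 - P := ex_intro _ _ erefl.
  have QQ : Q * Q = Q by rewrite eQ mulrBl mul1r mulrBr mulr1 PP subrr subr0.
  have PQ : P * Q = 0 by rewrite eQ mulrBr mulr1 PP subrr.
  have QP : Q * P = 0 by rewrite eQ mulrBl mul1r PP subrr.
  have hQ : ctrmx Q = Q by rewrite eQ ctrmxD ctrmxN Ph ctrmx1r.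
  have [B2 eB2] : exists B2, B2 = Q * B * Q := ex_intro _ _ erefl.
  have [Y eY] : exists Y, Y = coreEP B2 := ex_intro _ _ erefl.
  have hY : is_coreEP B2 Y by rewrite eY; exact: coreEP_spec.
  have [P2 eP2] : exists P2, P2 = B2 * Y := ex_intro _ _ erefl.
  have [[Ph2 P2P2 PY YP BP2] [YT TY nilB]] := cep_facts hY (esym eP2).
  have QP2 : Q * P2 = P2 by rewrite eP2 eB2 !mulrA QQ.
  have P2Q : P2 * Q = P2 by rewrite -{1}Ph2 -{1}hQ -ctrmxMr QP2 Ph2.
  have PP2 : P * P2 = 0 by rewrite -QP2 mulrA PQ mul0r.
  have P2P : P2 * P = 0 by rewrite -P2Q -mulrA QP mulr0.
  have [E3 eE3] : exists E3, E3 = Q - P2 := ex_intro _ _ erefl.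
  have E3P : E3 * P = 0 by rewrite eE3 mulrBl QP P2P subrr.
  have PE3 : P * E3 = 0 by rewrite eE3 mulrBr PQ PP2 subrr.
  have P2E3 : P2 * E3 = 0 by rewrite eE3 mulrBr P2Q P2P2 subrr.
  have E3P2 : E3 * P2 = 0 by rewrite eE3 mulrBl QP2 P2P2 subrr.
  have QE3 : Q * E3 = E3 by rewrite eE3 mulrBr QQ QP2.
  have E3Q : E3 * Q = E3 by rewrite eE3 mulrBl QQ P2Q.
  have E3E3 : E3 * E3 = E3 by rewrite {1}eE3 mulrBl QE3 P2E3 subr0.
  have PB : P * B = P * A by rewrite eP -mulrA -hXB mulrA.
  have BP : B * P = A * P.
    by rewrite -{1}XT mulrA -hAB -eP !mulrA PP -AP.
  exists P, P2.
  have e3 : 1%:M - P - P2 = E3 by rewrite eE3 eQ one_mx.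
  cbv zeta; rewrite /idem_system3 e3 !mulmxE one_mx.
  split.
  + split; [exact: eP | split; [exact: Ph2 | exact: P2P2]].
  + split; [exact: PP | exact: P2P2 | exact: E3E3 | | ].
      rewrite eE3 eQ addrC (addrC P) addrA !subrK; reflexivity.
    split; first split; [exact: PP2 | exact: P2P | exact: PE3 | exact: E3P | ].
    split; [exact: P2E3 | exact: E3P2].
  + split.
      rewrite -mulrA AP !mulrA P2P !mul0r; reflexivity.
    rewrite -mulrA AP !mulrA E3P !mul0r; reflexivity.
  + split; first by split; rewrite PB; reflexivity.
    split.
    * rewrite -mulrA BP AP !mulrA P2P !mul0r; reflexivity.
    * rewrite -mulrA BP AP !mulrA E3P !mul0r; reflexivity.
    * rewrite -E3Q -QP2.
      have -> : E3 * Q * B * (Q * P2) = E3 * B2 * P2 by rewrite eB2 !mulrA.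
      rewrite -mulrA BP2 !mulrA E3P2 !mul0r; reflexivity.
  + split.
    * apply: (@corner_helper _ _ P _ X).
      - rewrite !mulrA PP -(mulrA _ P P) PP; reflexivity.
      - rewrite PX XP; reflexivity.
      - exact: TX.
      - exact: XT.
    * have T2 : P2 * B * P2 = P2 * B2 * P2.
        rewrite eB2 !mulrA P2Q -(mulrA _ Q P2) QP2; reflexivity.
      rewrite T2; apply: (@corner_helper _ _ P2 _ Y).
      - rewrite !mulrA P2P2 -(mulrA _ P2 P2) P2P2; reflexivity.
      - rewrite PY YP; reflexivity.
      - exact: TY.
      - exact: YT.
    * have QE : P2 + E3 = Q by rewrite eE3 addrC subrK.
      have -> : P2 * A * P2 + P2 * A * E3 + E3 * A * P2 + E3 * A * E3
          = (P2 + E3) * A * (P2 + E3).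
        rewrite mulrDr !mulrDl addrACA !addrA; reflexivity.
      rewrite QE eQ; exact: nilA.
    * have L : (1 - P2) * Q = E3 by rewrite mulrBl mul1r P2Q eE3.
      have Rr : Q * (1 - P2) = E3 by rewrite mulrBr mulr1 QP2 eE3.
      have -> : E3 * B * E3 = (1 - P2) * B2 * (1 - P2).
        rewrite eB2 !mulrA L -(mulrA _ Q (1 - P2)) Rr; reflexivity.
      exact: nilB.
- move=> [E1 [E2 h]]; cbv zeta in h; rewrite /idem_system3 !mulmxE one_mx in h.
  have [E3 eE3] : exists E3, E3 = 1 - E1 - E2 := ex_intro _ _ erefl.
  rewrite -eE3 in h.
  move: h => [[hE1 _] _ [hA21 hA31] [[h11 h12 h13] [h21 h31 _]] _].
  have [[_ _ PX XP _] _] := cep_facts hX (esym hE1).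
  have hsum : E1 + E2 + E3 = 1 by rewrite eE3 addrC (addrC E1) addrA !subrK.
  rewrite !mulmxE.
  have BE1 : B * E1 = A * E1.
    rewrite -[B * E1]mul1r -[A * E1]mul1r -hsum !mulrDl !mulrA.
    rewrite h21 h31 hA21 hA31 !addr0 h11; reflexivity.
  have E1B : E1 * B = E1 * A.
    rewrite -[E1 * B]mulr1 -hsum !mulrDr h11 h12 h13 -!mulrDr hsum mulr1; reflexivity.
  split.
  + rewrite -PX !mulrA BE1; reflexivity.
  + rewrite -XP -!mulrA E1B; reflexivity.
Qed.
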